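(* Let $w$ be an instance of Metric-MAXCUT on a finite set $X$, let $\epsilon>0$, and let $(L,R)$ be a $(3+\epsilon)$-locally stable cut. Then $L$ or $R$ is a metric ball, i.e. a set of the form $\{y\in X: w(c,y)\le r\}$ for some $c\in X$ and $r\ge0$.
   Context: An instance of Metric-MAXCUT is a finite set $X$ with a metric $w$. For $x\in X$ and $B\subseteq X$, $w(x,B)=\sum_{b\in B}w(x,b)$. A cut $(L,R)$ (a partition of $X$) is $\gamma$-locally stable if $w(x,R)\ge\gamma w(x,L)$ for every $x\in L$ and $w(z,L)\ge\gamma w(z,R)$ for every $z\in R$. *)

(* Defs.v *)
From mathcomp Require Import all_boot all_order all_algebra.
Set Implicit Arguments. Unset Strict Implicit. Unset Printing Implicit Defensive.
Import Order.TTheory GRing.Theory Num.Theory.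
Local Open Scope ring_scope.

Definition is_metric (T : finType) (R : realFieldType) (w : T -> T -> R) : Prop :=
  [/\ forall x y, 0 <= w x y,
      forall x y, w x y = 0 <-> x = y,
      forall x y, w x y = w y x &
      forall x y z, w x z <= w x y + w y z].

Definition wset (T : finType) (R : realFieldType) (w : T -> T -> R) (x : T) (B : {set T}) : R :=
  \sum_(b in B) w x b.

Definition locally_stable (T : finType) (R : realFieldType) (w : T -> T -> R)
    (gamma : R) (L Rt : {set T}) : Prop :=
  (forall x, x \in L -> gamma * wset w x L <= wset w x Rt) /\
  (forall z, z \in Rt -> gamma * wset w z Rt <= wset w z L).

Definition is_ball (T : finType) (R : realFieldType) (w : T -> T -> R) (B : {set T}) : Prop :=
  exists c : T, exists r : R, 0 <= r /\ B = [set y | w c y <= r].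

(* Main.v *)
Require Import Defs.
From mathcomp Require Import all_boot all_order all_algebra.
Import Order.TTheory GRing.Theory Num.Theory.
From mathcomp Require Import lra.
From Stdlib Require Import Classical.
Local Open Scope ring_scope.

Lemma alg_step (R : realFieldType) (a b d P Q U V g : R) : 1 <= g -> 0 < d -> 0 <= a -> 0<= b ->
 Q <= b*d + U -> g*U <= V -> V <= a*d + P -> g * P <= Q -> a*d <= 2*P -> a*d*(g^+2-3) <= 2*g*b*d.
Proof.
intros.
have h1 : g * Q <= g * (b*d+U) by rewrite ler_wpM2l //; lra.
have h2 : g * (g*P) <= g * Q by rewrite ler_wpM2l //; lra.
have h3 : 0 <= (g^+2 - 1) * (2*P - a*d) by apply: mulr_ge0; nra.
nra.
Qed.

Lemma side (T : finType) (R : realFieldType) (w : T -> T -> R) (g : R) (S S' : {set T}) :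
 is_metric w -> 1 <= g -> S' = ~: S ->
 (forall x, x \in S -> g * wset w x S <= wset w x S') ->
 (forall z, z \in S' -> g * wset w z S' <= wset w z S) ->
 (S != set0) -> ~ is_ball w S ->
 #|S|%:R * (g^+2 - 3) <= 2 * g * #|S'|%:R.
Proof.
move=> [w0 w0E wC wT] g1 eS stS stS' /set0Pn [c0 c0S] nb.
pose P := fun p : T * T => (p.1 \in S) && (p.2 \in S).
have P0 : P (c0, c0) by rewrite /P /= c0S.
case: (@arg_maxP _ _ _ (c0, c0) P (fun p => w p.1 p.2) P0) => [[c y]] /andP [/= cS yS] hmax'.
set d := w c y.
have hmax : forall u v, u \in S -> v \in S -> w u v <= d.
  by move=> u v uS vS; apply: (hmax' (u, v)); rewrite /P /= uS vS.
have hball : forall u, u \in S -> exists2 z, z \in S' & w u z <= d.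
  move=> u uS; case: (boolP [exists z in S', w u z <= d]).
    by move=> /existsP [z /andP [zS hz]]; exists z.
  move=> /existsPn hn; exfalso; apply: nb; exists u, d; split; first exact: w0.
  apply/setP => v; rewrite inE; case vS: (v \in S); first by rewrite hmax.
  have := hn v; rewrite eS inE vS /=; by move/negbTE ->.
have dpos : 0 < d.
  rewrite lt_neqAle w0 andbT; apply/negP => /eqP d0.
  apply: nb; exists c, d; split; first exact: w0.
  apply/setP => v; rewrite inE; apply/idP/idP; first by move=> vS; exact: hmax.
  move=> h; have : w c v = 0 by apply/le_anti; rewrite w0 andbT d0.
  by move/w0E => <-.
have tri : forall x, d <= w c x + w y x.
  by move=> x; rewrite (wC y x); apply: wT.
have sumtri : #|S|%:R * d <= wset w c S + wset w y S.
  rewrite /wset -big_split /= mulr_natl -sumr_const; apply: ler_sum => x _; exact: tri.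
have [c' [c'S hc']] : exists c', c' \in S /\ #|S|%:R * d <= 2 * wset w c' S.
  case: (leP (wset w c S) (wset w y S)) => h; [exists y | exists c]; split => //; lra.
have [z zS' hz] := hball c' c'S.
have i1 : wset w c' S' <= #|S'|%:R * w c' z + wset w z S'.
  rewrite /wset mulr_natl -sumr_const -big_split /=; apply: ler_sum => z' _; exact: wT.
have i3 : wset w z S <= #|S|%:R * w z c' + wset w c' S.
  rewrite /wset mulr_natl -sumr_const -big_split /=; apply: ler_sum => z' _; exact: wT.
have j1 : #|S'|%:R * w c' z <= #|S'|%:R * d by rewrite ler_wpM2l.
have j3 : #|S|%:R * w z c' <= #|S|%:R * d by rewrite ler_wpM2l // wC.
have := @alg_step R #|S|%:R #|S'|%:R d (wset w c' S) (wset w c' S') (wset w z S') (wset w z S) g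
  g1 dpos (ler0n _ _) (ler0n _ _) ltac:(lra) (stS' z zS') ltac:(lra) (stS c' c'S) hc'.
move=> h.
have h' : (#|S|%:R * (g ^+ 2 - 3)) * d <= (2 * g * #|S'|%:R) * d.
  by lra.
by rewrite -(ler_pM2r dpos).
Qed.

Lemma full_ball (T : finType) (R : realFieldType) (w : T -> T -> R) :
  is_metric w -> (0 < #|T|)%N -> is_ball w [set: T].
Proof.
move=> [w0 w0E wC wT] /card_gt0P [c _].
exists c, (\sum_(y : T) w c y); split; first by apply: sumr_ge0 => y _; exact: w0.
apply/setP => v; rewrite !inE; symmetry; apply/idP.
by rewrite (bigD1 v) //= lerDl; apply: sumr_ge0 => y _; exact: w0.
Qed.

Theorem theorem5 (T : finType) (R : realFieldType) (w : T -> T -> R)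
    (eps : R) (L Rt : {set T}) :
  is_metric w -> 0 < eps ->
  (0 < #|T|)%N ->
  Rt = ~: L ->
  locally_stable w (3 + eps) L Rt ->
  is_ball w L \/ is_ball w Rt.
Proof.
move=> hm ep hT eR [st1 st2].
case: (eqVneq L set0) => [L0 | Ln0].
  by right; rewrite eR L0 setC0; exact: full_ball.
case: (eqVneq Rt set0) => [R0 | Rn0].
  left; have -> : L = [set: T] by rewrite -(setCK L) -eR R0 setC0.
  exact: full_ball.
case: (classic (is_ball w L)) => [hL|nL]; first by left.
case: (classic (is_ball w Rt)) => [hR|nR]; first by right.
exfalso.
have g1 : 1 <= 3 + eps by lra.
have h1 := @side _ _ w _ _ _ hm g1 eR st1 st2 Ln0 nL.
have eL : L = ~: Rt by rewrite eR setCK.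
have h2 := @side _ _ w _ _ _ hm g1 eL st2 st1 Rn0 nR.
have a0 : (0 < #|L|)%N by rewrite card_gt0.
have b0 : (0 < #|Rt|)%N by rewrite card_gt0.
have a0' : (0:R) < #|L|%:R by rewrite ltr0n.
have b0' : (0:R) < #|Rt|%:R by rewrite ltr0n.
have hs : (#|L|%:R + #|Rt|%:R) * (eps * (4 + eps)) <= 0 by nra.
have : 0 < (#|L|%:R + #|Rt|%:R) * (eps * (4 + eps)) :> R.
  apply: mulr_gt0; first lra. apply: mulr_gt0; lra.
lra.
Qed.
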